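(* Let $\mathbf S$ be an SRRW in $\mathbb{R}^d$ with parameter $\alpha\in[0,1)$ and step distribution $\mu\ne\delta_{\mathbf 0}$. For $R>0$ let $\zeta_R:=\inf\{n\in\mathbb N:\|\mathbf S_n\|\ge R\}$. Then $\mathbb E\zeta_R<\infty$ for every $R>0$.
   Context: SRRW: $\mu$ a probability measure on $\mathbb{R}^d$, $\alpha\in[0,1]$; $(\xi_n)_{n\ge2}$ i.i.d. Bernoulli($\alpha$), $(U[n])_{n\ge1}$ independent with $U[n]$ uniform on $\{1,\dots,n\}$. Sample $\mathbf X_1\sim\mu$; for $n\ge1$, if $\xi_{n+1}=1$ set $\mathbf X_{n+1}=\mathbf X_{U[n]}$, else sample $\mathbf X_{n+1}\sim\mu$ independently. $\mathbf S_0=\mathbf 0$, $\mathbf S_n=\sum_{i\le n}\mathbf X_i$. *)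

(* Defs.v *)
From HB Require Import structures.
From mathcomp Require Import all_boot all_order all_algebra.
From mathcomp Require Import all_classical all_reals all_analysis.
Set Implicit Arguments. Unset Strict Implicit. Unset Printing Implicit Defensive.
Import Order.TTheory GRing.Theory Num.Theory.
Local Open Scope classical_set_scope.
Local Open Scope ring_scope.

(* R^d is modelled as d.-tuple R, with mathcomp-analysis' product sigma-algebra. *)

Definition mutually_independent (R : realType) (dO : measure_display)
  (O : measurableType dO) (P : probability O R) (I : eqType)
  (G : I -> set (set O)) : Prop :=
  forall (s : seq I), uniq s ->
  forall A : I -> set O, (forall i, i \in s -> G i (A i)) ->
  P (\big[setI/setT]_(i <- s) A i) = (\prod_(i <- s) P (A i))%E.

Definition preimages (dO dT : measure_display) (O : measurableType dO)
  (T : measurableType dT) (f : O -> T) : set (set O) :=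
  [set f @^-1` B | B in [set B : set T | measurable B]].

(** The SRRW steps, built from the innovations Y (Y n ~ mu),
    the coins xi (xi n ~ Bernoulli alpha) and the indices U (U n uniform on 1..n):
    X_1 = Y_1, X_{n+1} = X_{U[n]} if xi_{n+1} = 1, else Y_{n+1}.
    srrw_steps n w = [:: X_1 w; ...; X_n w]. *)
Fixpoint srrw_steps (R : realType) (d : nat) (O : Type)
  (xi : nat -> O -> bool) (U : nat -> O -> nat) (Y : nat -> O -> d.-tuple R)
  (n : nat) (w : O) : seq (d.-tuple R) :=
  match n with
  | 0 => [::]
  | m.+1 =>
      let prev := srrw_steps xi U Y m w in
      let x := if m == 0%N then Y 1%N w
               else if xi m.+1 w then nth (Y m.+1 w) prev (U m w).-1
               else Y m.+1 w in
      rcons prev x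
  end.

Definition srrw_X (R : realType) (d : nat) (O : Type)
  (xi : nat -> O -> bool) (U : nat -> O -> nat) (Y : nat -> O -> d.-tuple R)
  (n : nat) (w : O) : d.-tuple R :=
  nth (Y n w) (srrw_steps xi U Y n w) n.-1.

Definition srrw_S (R : realType) (d : nat) (O : Type)
  (xi : nat -> O -> bool) (U : nat -> O -> nat) (Y : nat -> O -> d.-tuple R)
  (n : nat) (w : O) (i : 'I_d) : R :=
  \sum_(k < n) tnth (srrw_X xi U Y k.+1 w) i.

Definition eucl_norm (R : realType) (d : nat) (v : 'I_d -> R) : R :=
  Num.sqrt (\sum_(i < d) v i ^+ 2).

(** zeta_r = inf {n in N : ||S_n|| >= r}  (= +oo if the set is empty) *)
Definition srrw_exit_time (R : realType) (d : nat) (O : Type)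
  (xi : nat -> O -> bool) (U : nat -> O -> nat) (Y : nat -> O -> d.-tuple R)
  (r : R) (w : O) : \bar R :=
  ereal_inf [set (n%:R)%:E | n in
     [set n : nat | r <= eucl_norm (srrw_S xi U Y n w)]].

(* Main.v *)
Require Import Defs.
From HB Require Import structures.
From mathcomp Require Import all_boot all_order all_algebra.
From mathcomp Require Import all_classical all_reals all_analysis.
From mathcomp Require Import measurable_realfun.
From mathcomp Require Import ring lra zify.
Import Order.TTheory GRing.Theory Num.Theory.
Local Open Scope classical_set_scope.
Local Open Scope ring_scope.
Lemma bigI_mem (T : Type) (I : eqType) (s : seq I) (F : I -> set T) (w : T) :
  (\big[setI/setT]_(i <- s) F i) w <-> (forall i, i \in s -> F i w).
Proof.
elim: s => [|a s IH]; first by rewrite big_nil; split => // _ i; rewrite in_nil.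
rewrite big_cons; split.
  move=> [Fa /IH H] i; rewrite in_cons => /orP[/eqP->//|]; exact: H.
move=> H; split; first by apply: H; rewrite mem_head.
by apply/IH => i si; apply: H; rewrite in_cons si orbT.
Qed.

Lemma bigU_mem (T : Type) (I : eqType) (s : seq I) (F : I -> set T) (w : T) :
  (\big[setU/set0]_(i <- s) F i) w <-> (exists i, i \in s /\ F i w).
Proof.
elim: s => [|a s IH]; first by rewrite big_nil; split => // -[i]; rewrite in_nil => -[].
rewrite big_cons; split.
  move=> [Fa|/IH [i [si Fi]]]; first by exists a; rewrite mem_head.
  by exists i; rewrite in_cons si orbT.
move=> [i]; rewrite in_cons => -[/orP[/eqP->|si] Fi]; first by left.
by right; apply/IH; exists i.
Qed.

Lemma prod_const_seq (R : realType) (I : Type) (s : seq I) (f : I -> \bar R) (c : R) :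
  (forall i, f i = c%:E) -> (\prod_(i <- s) f i = (c ^+ size s)%:E)%E.
Proof.
move=> fc; elim: s => [|a s IH]; first by rewrite big_nil expr0.
by rewrite big_cons IH fc /= exprS EFinM.
Qed.

Lemma ereal_all_nat (R : realType) (x : \bar R) :
  (forall n : nat, (n%:R)%:E <= x)%E -> x = +oo%E.
Proof.
case: x => [r||] H //.
  have := H (Num.Def.trunc r).+1; rewrite lee_fin => /(lt_le_trans (truncnS_gt r)).
  by rewrite ltxx.
by have := H 0%N.
Qed.

Lemma mono_int d (T : measurableType d) (R : realType) (mu : measure T R)
  (f g : T -> \bar R) : (forall x, 0 <= f x)%E -> (forall x, f x <= g x)%E ->
  (\int[mu]_x f x <= \int[mu]_x g x)%E.
Proof.
move=> f0 fg; have g0 x : (0 <= g x)%E by apply: le_trans (fg x).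
rewrite !ge0_integralTE //; apply: le_ereal_sup => _ [h hf <-]; exists h => //.
by move=> x; apply: le_trans (fg x).
Qed.

Lemma negl_bigU d (T : measurableType d) (R : realType) (mu : measure T R)
  (I : eqType) (s : seq I) (F : I -> set T) :
  (forall i, mu.-negligible (F i)) -> mu.-negligible (\big[setU/set0]_(i <- s) F i).
Proof.
move=> H; elim: s => [|a s IH]; first by rewrite big_nil; exact: negligible_set0.
by rewrite big_cons; apply: negligibleU.
Qed.

Lemma eucl_ge (R : realType) (dd : nat) (v : 'I_dd -> R) (i : 'I_dd) :
  `|v i| <= eucl_norm v.
Proof.
rewrite /eucl_norm -sqrtr_sqr ler_sqrt; last by apply: sumr_ge0 => j _; exact: sqr_ge0.
rewrite (bigD1 i) //= lerDl; apply: sumr_ge0 => j _; exact: sqr_ge0.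
Qed.
Lemma size_steps (R : realType) (d : nat) (O : Type) xi U (Y : nat -> O -> d.-tuple R) n w :
  size (srrw_steps xi U Y n w) = n.
Proof. by elim: n => [|n IH] //=; rewrite size_rcons IH. Qed.

Lemma X_fresh (R : realType) (d : nat) (O : Type) xi U (Y : nat -> O -> d.-tuple R) j w :
  (2 <= j)%N -> xi j w = false -> srrw_X xi U Y j w = Y j w.
Proof.
case: j => [|[|j]] // _ hx.
rewrite /srrw_X /= nth_rcons.
by rewrite size_rcons size_steps ltnn eqxx hx.
Qed.

Lemma S_diff (R : realType) (d : nat) (O : Type) xi U (Y : nat -> O -> d.-tuple R) a m w i :
  srrw_S xi U Y (a + m) w i - srrw_S xi U Y a w i =
  \sum_(t < m) tnth (srrw_X xi U Y (a + t).+1 w) i.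
Proof.
rewrite /srrw_S -!(big_mkord xpredT (fun k => tnth (srrw_X xi U Y k.+1 w) i)).
rewrite (@big_cat_nat _ _ _ a 0 (a + m)) ?leq_addr //= addrAC subrr add0r.
rewrite -{1}(add0n a) big_addn addKn big_mkord.
by apply: eq_bigr => t _; rewrite addnC.
Qed.

Lemma mS (R : realType) (d : nat) (i : 'I_d) (e s : R) :
  measurable [set y : d.-tuple R | e < s * tnth y i].
Proof.
have -> : [set y : d.-tuple R | e < s * tnth y i] =
    (fun y => s * tnth y i) @^-1` `]e, +oo[.
  by apply/seteqP; split => y /=; rewrite in_itv /= andbT.
rewrite -[X in measurable X]setTI.
have mf : measurable_fun setT (fun y : d.-tuple R => s * tnth y i).
  by apply: measurable_funM => //; exact: measurable_tnth.
apply: mf => //; exact: measurable_itv.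
Qed.

Lemma exists_dir (R : realType) d (mu : probability (d.-tuple R) R) :
 (exists A : set (d.-tuple R), measurable A /\
     mu A <> \d_(nseq_tuple d (0 : R)) A) ->
 exists i0 : 'I_d, exists s : R, exists e : R,
   0 < e /\ `|s| = 1 /\ mu [set y | e < s * tnth y i0] <> 0%E.
Proof.
move=> [A [mA hA]]; apply: contrapT => H.
have Z i e s : 0 < e -> `|s| = 1 -> mu [set y | e < s * tnth y i] = 0%E.
  move=> e0 s1; apply: contrapT => h; apply: H; exists i, s, e; done.
pose N := \bigcup_n \big[setU/set0]_(i <- enum 'I_d)
   ([set y : d.-tuple R | n.+1%:R^-1 < 1 * tnth y i] `|`
    [set y | n.+1%:R^-1 < -1 * tnth y i]).
have nN : mu.-negligible N.
  apply: negligible_bigcup => n; apply: negl_bigU => i; apply: negligibleU.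
    apply/(negligibleP mu (mS _ _ i _ _)); apply: Z; first by rewrite invr_gt0 ltr0Sn.
    by rewrite normr1.
  apply/(negligibleP mu (mS _ _ i _ _)); apply: Z; first by rewrite invr_gt0 ltr0Sn.
  by rewrite normrN normr1.
have sub : ~` [set nseq_tuple d (0:R)] `<=` N.
  move=> y /= hy.
  have [i hi] : exists i, tnth y i != 0.
    apply: contrapT => hh; apply: hy; apply: eq_from_tnth => i.
    rewrite tnth_nseq; apply/eqP; apply: contrapT => h; apply: hh; exists i.
    exact/negP.
  set v := tnth y i in hi *.
  have v0 : 0 < `|v| by rewrite normr_gt0.
  pose n := Num.Def.trunc (`|v|^-1).
  have hn : n.+1%:R^-1 < `|v|.
    rewrite invf_plt ?posrE ?ltr0Sn //; exact: truncnS_gt.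
  exists n => //; apply/bigU_mem; exists i; split; first by rewrite mem_enum.
  have [vp|vn] := ltP 0 v.
    by left => /=; rewrite mul1r; rewrite gtr0_norm in hn.
  by right => /=; rewrite mulN1r; rewrite ler0_norm in hn.
apply: hA; rewrite diracE; case: (boolP (nseq_tuple d 0 \in A)) => h0.
  have hc : mu (~` A) = 0%E.
    apply: measure_negligible; first exact: measurableC.
    apply: negligibleS nN => y /= nA; apply: sub => /= yz; apply: nA.
    by rewrite yz; exact/set_mem.
  by rewrite -[A]setCK probability_setC ?hc ?sube0 //; exact: measurableC.
apply: measure_negligible => //; apply: negligibleS nN => y Ay; apply: sub => /= yz.
by move: h0; rewrite -yz; move/negP; apply; exact/mem_set.
Qed.
Theorem lemma3p13 (R : realType) (d : nat) (dO : measure_display)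
  (O : measurableType dO) (P : probability O R)
  (alpha : R) (mu : probability (d.-tuple R) R)
  (xi : nat -> O -> bool) (U : nat -> O -> nat) (Y : nat -> O -> d.-tuple R) :
  0 <= alpha -> alpha < 1 ->
  (* mu <> dirac at the origin *)
  (exists A : set (d.-tuple R), measurable A /\
     mu A <> \d_(nseq_tuple d (0 : R)) A) ->
  (* xi_n ~ Bernoulli(alpha), n >= 2 *)
  (forall n, (2 <= n)%N -> measurable_fun setT (xi n) /\
     P (xi n @^-1` [set true]) = alpha%:E) ->
  (* U[n] uniform on {1,...,n}, n >= 1 *)
  (forall n, (1 <= n)%N -> measurable_fun setT (U n) /\
     forall k, (1 <= k <= n)%N -> P (U n @^-1` [set k]) = (n%:R^-1)%:E) ->
  (* Y_n ~ mu, n >= 1 *)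
  (forall n, (1 <= n)%N -> measurable_fun setT (Y n) /\
     forall A, measurable A -> P (Y n @^-1` A) = mu A) ->
  (* (xi_n)_{n>=2}, (U[n])_{n>=1}, (Y_n)_{n>=1} all mutually independent *)
  mutually_independent P (fun i : (nat + nat) + nat =>
     match i with
     | inl (inl n) => preimages (xi n.+2)
     | inl (inr n) => preimages (U n.+1)
     | inr n => preimages (Y n.+1)
     end) ->
  forall r : R, 0 < r ->
  (\int[P]_w srrw_exit_time xi U Y r w < +oo)%E.
Proof.
move=> a0 a1 hmu hxi hU hY hind r r0.
have [i0 [s [e [e0 [s1 muB0]]]]] := exists_dir _ _ _ hmu.
set B := [set y : d.-tuple R | e < s * tnth y i0] in muB0.
have mB : measurable B := mS _ _ i0 e s.
pose m := (Num.Def.trunc (2 * r / e)).+1.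
have hm : 2 * r < m%:R * e by rewrite -ltr_pdivrMr //; exact: truncnS_gt.
have m0 : (0 < m)%N by [].
clearbody m.
pose q := fine (mu B).
have muBq : mu B = q%:E by rewrite /q fineK //; exact: fin_num_measure.
have q0 : 0 < q.
  rewrite lt_neqAle; apply/andP; split.
    by apply/eqP => hq; apply: muB0; rewrite muBq -hq.
  by rewrite -lee_fin -muBq.
have q1 : q <= 1 by rewrite -lee_fin -muBq; exact: probability_le1.
pose p := ((1 - alpha) * q) ^+ m.
have p0 : 0 < p by apply: exprn_gt0; apply: mulr_gt0 => //; rewrite subr_gt0.
have p1 : p <= 1.
  apply: exprn_ile1; first by apply: mulr_ge0; [rewrite subr_ge0 ltW|exact: ltW].
  by apply: mulr_ile1 => //; [rewrite subr_ge0 ltW|exact: ltW|rewrite lerBlDr lerDl].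
pose Aset (i : (nat + nat) + nat) : set O :=
  match i with
  | inl (inl n) => xi n.+2 @^-1` [set false]
  | inl (inr n) => setT
  | inr n => Y n.+1 @^-1` B
  end.
pose fidx (k : nat) (tb : nat * bool) : (nat + nat) + nat :=
  if tb.2 then inl (inl (k * m + tb.1)%N) else inr (k * m + tb.1).+1.
pose tbs := [seq (t, b) | t <- iota 0 m, b <- [:: true; false]].
pose sT (T : seq nat) := [seq fidx k tb | k <- T, tb <- tbs].
pose E (k : nat) : set O := [set w | forall t, (t < m)%N ->
  xi (k * m + t).+2 w = false /\ B (Y (k * m + t).+2 w)].
pose G (T : seq nat) : set O := [set w | forall k, k \in T -> E k w].
pose F (K : nat) : set O := [set w | forall k, (k < K)%N -> ~ E k w].
have mxi n : measurable (xi n.+2 @^-1` [set false]).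
  by have [mf _] := hxi n.+2 isT; rewrite -[X in measurable X]setTI; exact: mf.
have mY n : measurable (Y n.+1 @^-1` B).
  by have [mf _] := hY n.+1 isT; rewrite -[X in measurable X]setTI; exact: mf.
have mAset i : measurable (Aset i) by case: i => [[n|n]|n] //=.
have PAxi n : P (xi n.+2 @^-1` [set false]) = (1 - alpha)%:E.
  have -> : xi n.+2 @^-1` [set false] = ~` (xi n.+2 @^-1` [set true]).
    by apply/seteqP; split => w /=; case: (xi n.+2 w).
  have mt : measurable (xi n.+2 @^-1` [set true]).
    by have [mf _] := hxi n.+2 isT; rewrite -[X in measurable X]setTI; exact: mf.
  by rewrite probability_setC // (hxi n.+2 isT).2 EFinB.
have PAY n : P (Y n.+1 @^-1` B) = q%:E by rewrite (hY n.+1 isT).2 // muBq.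
have GE T : G T = \big[setI/setT]_(i <- sT T) Aset i.
  apply/seteqP; split => w.
    move=> Gw; apply/bigI_mem => i /allpairsP [[k tb] [/= kT tbin ->]].
    move: tbin => /allpairsP [[t b] [/= tm bin ->]].
    have tm' : (t < m)%N.
      by move: tm; rewrite mem_iota.
    have [hx hy] := Gw k kT t tm'.
    by case: b bin => _ /=.
  move=> /bigI_mem H k kT t tm; split.
    have := H (fidx k (t, true)); apply.
    by apply: allpairs_f => //; apply: allpairs_f; rewrite ?mem_iota ?inE.
  have := H (fidx k (t, false)); apply.
  by apply: allpairs_f => //; apply: allpairs_f; rewrite ?mem_iota ?inE.
have usT T : uniq T -> uniq (sT T).
  move=> uT; apply: allpairs_uniq => //.
    apply: allpairs_uniq => //; first exact: iota_uniq.
    by move=> [t b] [t' b'] _ _ /= [-> ->].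
  move=> [k [t b]] [k' [t' b']] /allpairsP [[k1 tb1] [/= _ tb1in [-> ->]]].
  move=> /allpairsP [[k2 tb2] [/= _ tb2in [-> ->]]].
  move: tb1in tb2in => /allpairsP [[t1 b1] [/= t1m _ ->]].
  move=> /allpairsP [[t2 b2] [/= t2m _ ->]].
  rewrite mem_iota /= in t1m; rewrite mem_iota /= in t2m.
  have inj : (k1 * m + t1 = k2 * m + t2)%N -> k1 = k2 /\ t1 = t2.
    move=> h; have h1 := congr1 (divn^~ m) h; have h2 := congr1 (modn^~ m) h.
    move: h1 h2 => /=; rewrite !divnMDl // !divn_small // !addn0.
    by rewrite !modnMDl !modn_small // => -> ->.
  rewrite /fidx /=; case: b1; case: b2 => //= h.
    by case: h => /inj [-> ->].
  by case: h => /inj [-> ->].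
have PG T : uniq T -> P (G T) = (p ^+ size T)%:E.
  move=> uT; rewrite GE hind; [|exact: usT|]; last first.
    move=> [[n|n]|n] _ /=.
    - by exists [set false].
    - by exists setT => //; rewrite preimage_setT.
    - by exists B.
  rewrite /sT big_allpairs_dep.
  change ((\prod_(k <- T) \prod_(tb <- tbs) P (Aset (fidx k tb)))%E = (p ^+ size T)%:E).
  apply: prod_const_seq => k.
  rewrite (_ : p = ((1 - alpha) * q) ^+ size (iota 0 m)); last by rewrite size_iota.
  rewrite /tbs big_allpairs_dep /=.
  change ((\prod_(t <- iota 0 m) \prod_(b <- [:: true; false]) P (Aset (fidx k (t, b))))%E = (((1 - alpha) * q) ^+ size (iota 0 m))%:E).
  apply: prod_const_seq => t.
  by rewrite !big_cons big_nil /fidx /= PAxi PAY mule1 EFinM.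
have mG T : measurable (G T) by rewrite GE; apply: bigsetI_measurable.
have mE k : measurable (E k).
  have -> : E k = G [:: k].
    apply/seteqP; split => w /=; first by move=> Ew k'; rewrite inE => /eqP ->.
    by apply; rewrite inE.
  exact: mG.
have F0 : F 0%N = setT by apply/seteqP; split => w // _ k.
have FS K : F K.+1 = F K `&` ~` E K.
  apply/seteqP; split => w /=.
    move=> H; split; first by move=> k kK; apply: H; rewrite ltnS ltnW.
    exact: H.
  move=> [H1 H2] k; rewrite ltnS leq_eqVlt => /orP[/eqP ->//|]; exact: H1.
have mF K : measurable (F K).
  elim: K => [|K IH]; first by rewrite F0.
  by rewrite FS; apply: measurableI => //; exact: measurableC.
have key K : forall T, uniq T -> (forall k, k \in T -> (K <= k)%N) ->
    P (F K `&` G T) = (((1 - p) ^+ K) * p ^+ size T)%:E.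
  elim: K => [|K IH] T uT hT; first by rewrite F0 setTI PG // expr0 mul1r.
  have KT : K \notin T by apply/negP => /hT; rewrite ltnn.
  have e1 : F K.+1 `&` G T = (F K `&` G T) `\` (F K `&` G (K :: T)).
    rewrite FS; apply/seteqP; split => w /=.
      move=> [[h1 h2] h3]; split => // -[_ h4]; apply: h2; apply: h4.
      by rewrite mem_head.
    move=> [[h1 h3] h4]; split => //; split => // EK; apply: h4; split => //.
    by move=> k; rewrite inE => /orP[/eqP ->//|]; exact: h3.
  have e2 : (F K `&` G T) `&` (F K `&` G (K :: T)) = F K `&` G (K :: T).
    apply/seteqP; split => w /=; first by move=> [_ h].
    move=> [h1 h2]; split => //; split => // k kT; apply: h2.
    by rewrite inE kT orbT.
  have uKT : uniq (K :: T) by rewrite /= KT.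
  have hKT k : k \in K :: T -> (K <= k)%N.
    by rewrite inE => /orP[/eqP ->//|/hT /ltnW].
  rewrite e1 measureD; last 3 first.
  - by apply: measurableI.
  - by apply: measurableI.
  - have h1 : forall k, k \in T -> (K <= k)%N by move=> k /hT /ltnW.
    by rewrite -[X in (X < _)%E]/(P (F K `&` G T)) (IH T uT h1) ltry.
  have h1 : forall k, k \in T -> (K <= k)%N by move=> k /hT /ltnW.
  rewrite -[X in (X - _)%E]/(P (F K `&` G T)).
  rewrite -[X in (_ - X)%E]/(P ((F K `&` G T) `&` (F K `&` G (K :: T)))).
  rewrite e2 (IH T uT h1) (IH (K :: T) uKT hKT).
  by rewrite -EFinB /=; congr EFin; rewrite !exprS; ring.
have PF K : P (F K) = ((1 - p) ^+ K)%:E.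
  have h0 : forall k, k \in [::] -> (K <= k)%N by [].
  have := key K [::] isT h0.
  have -> : G [::] = setT by apply/seteqP; split => w // _ k.
  by rewrite setIT /= expr0 mulr1.
have hit k w : E k w -> exists n, (n <= k * m + m + 1)%N /\
    r <= eucl_norm (srrw_S xi U Y n w).
  move=> Ek.
  pose a := (k * m + 1)%N.
  have hd := S_diff _ _ _ xi U Y a m w i0.
  have hsum : m%:R * e <= s * (srrw_S xi U Y (a + m) w i0 - srrw_S xi U Y a w i0).
    rewrite hd mulr_sumr mulr_natl -[in X in e *+ X](card_ord m) -sumr_const.
    apply: ler_sum => t _.
    have [hx hy] := Ek t (ltn_ord t).
    have -> : (a + t).+1 = (k * m + t).+2 by rewrite /a addn1 addSn.
    by rewrite X_fresh //; exact: ltW.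
  move: hsum; set Sb := srrw_S xi U Y (a + m) w i0; set Sa := srrw_S xi U Y a w i0.
  move=> hsum; rewrite mulrBr in hsum.
  case: (lerP r (s * Sb)) => h.
    exists (a + m)%N; split; first by rewrite /a addnAC.
    apply: le_trans (eucl_ge _ _ _ i0); apply: le_trans h _.
    by rewrite -/Sb -[`|Sb|]mul1r -s1 -normrM ler_norm.
  exists a; split; first by rewrite /a -addnA leq_add2l leq_addl.
  apply: le_trans (eucl_ge _ _ _ i0); rewrite -/Sa.
  have h2 : r <= - (s * Sa) by lra.
  by apply: le_trans h2 _; apply: le_trans (ler_norm _) _; rewrite normrN normrM s1 mul1r.
have zle w n : r <= eucl_norm (srrw_S xi U Y n w) ->
    (srrw_exit_time xi U Y r w <= (n%:R)%:E)%E.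
  by move=> h; apply: ereal_inf_lbound; exists n.
have z0 w : (0 <= srrw_exit_time xi U Y r w)%E.
  by apply/ereal_infP => _ [n _ <-]; rewrite lee_fin.
pose c := m.+1.
pose f (K : nat) (w : O) : \bar R := ((c%:R : R)%:E * (\1_(F K) w : R)%:E)%E.
have f0 K w : (0 <= f K w)%E.
  by rewrite /f; apply: mule_ge0; rewrite lee_fin // indicE; case: (_ \in _).
have psum w N : (forall K, (K < N)%N -> F K w) ->
    (((N * c)%:R)%:E <= \sum_(0 <= K <oo) f K w)%E.
  move=> H; apply: le_trans (@nneseries_lim_ge _ (fun K => f K w) xpredT 0 N _); last first.
    by move=> n _ _; exact: f0.
  have -> : (\sum_(0 <= i < N | xpredT i) f i w = \sum_(0 <= i < N) (c%:R : R)%:E)%E.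
    apply: eq_big_nat => K /andP [_ KN]; rewrite /f indicE mem_set ?mule1 //; exact: H.
  by rewrite sumEFin lee_fin sumr_const_nat subn0 natrM mulr_natl.
have gbound w : (srrw_exit_time xi U Y r w <= \sum_(0 <= K <oo) f K w)%E.
  case: (pselect (exists k, E k w)) => [ex|nex].
    have ex' : exists k, `[< E k w >] by case: ex => k Ek; exists k; exact/asboolP.
    case: (ex_minnP ex') => k /asboolP Ek kmin.
    have [n [nle hn]] := hit k w Ek.
    apply: le_trans (zle w n hn) _.
    apply: le_trans (psum w k.+1 _).
      rewrite lee_fin ler_nat; apply: leq_trans nle _.
      by rewrite /c mulSn mulnS; lia.
    move=> K KK k' k'K Ek'; have := kmin k' (asboolT Ek'); lia.
  have allF K : F K w by move=> k _ Ek; apply: nex; exists k.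
  have -> : (\sum_(0 <= K <oo) f K w = +oo)%E.
    apply: ereal_all_nat => N; apply: le_trans (psum w N (fun K _ => allF K)).
    by rewrite lee_fin ler_nat leq_pmulr.
  exact: leey.
have mf K : measurable_fun setT (f K).
  by apply: measurable_funeM; apply/measurable_EFinP; exact: measurable_indic.
have intf K : (\int[P]_w f K w = (c%:R * (1 - p) ^+ K)%:E)%E.
  rewrite ge0_integralZl_EFin //; first by rewrite integral_indic // setIT -[X in (_ * X)%E]/(P (F K)) PF EFinM.
  all: try by move=> x _; rewrite lee_fin indicE; case: (_ \in _).
  all: try by apply/measurable_EFinP; exact: measurable_indic.
apply: le_lt_trans (mono_int _ _ _ P _ _ z0 gbound) _.
rewrite integral_nneseries //.
all: try by move=> n x _; exact: f0.
have -> : (\sum_(0 <= n <oo) \int[P]_x f n x = \sum_(0 <= n <oo) (c%:R * (1 - p) ^+ n)%:E)%E.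
  by apply: congr_lim; apply/funext => n; apply: eq_bigr => K _; exact: intf.
apply: (@le_lt_trans _ _ ((c%:R / p)%:E)); last exact: ltry.
apply: lime_le; first by apply: is_cvg_nneseries => K _ _; rewrite lee_fin mulr_ge0 // exprn_ge0 // subr_ge0.
apply: nearW => n; rewrite sumEFin lee_fin -mulr_sumr ler_wpM2l //.
rewrite big_mkord; have h := subrX1 (1 - p) n.
set S := \sum_(i < n) _ in h *.
have zn : 0 <= (1 - p) ^+ n by rewrite exprn_ge0 // subr_ge0.
rewrite -(ler_pM2l p0) mulfV ?gt_eqF //.
nra.
Qed.
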